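(* On a Klein bottle with a flat metric, two distinct closed geodesics without self-intersections cannot intersect in exactly three points. *)

(* Defs.v *)
From Stdlib Require Import Reals ZArith.
Open Scope R_scope.

(* Every flat Klein bottle is isometric to the quotient of the Euclidean
   plane by the group G(a,b) (a, b > 0) generated by the glide reflection
   (x,y) |-> (x + a, -y) and the translation (x,y) |-> (x, y + b).
   Its elements are exactly the maps kb_act a b m n, m n : Z. *)
Definition kb_act (a b : R) (m n : Z) (p : R * R) : R * R :=
  (fst p + IZR m * a,
   (if Z.even m then snd p else - snd p) + IZR n * b).

Definition kb_equiv (a b : R) (p q : R * R) : Prop :=
  exists m n : Z, q = kb_act a b m n p.

Definition line (p v : R * R) (t : R) : R * R :=
  (fst p + t * fst v, snd p + t * snd v).

(* The geodesic t |-> [line p v t] is a closed geodesic without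
   self-intersections: v <> 0 and there is a period T > 0 such that the
   curve is periodic of period T and injective on each period, i.e.
   it is an embedding of the circle R / T Z into the Klein bottle. *)
Definition simple_closed_geodesic (a b : R) (p v : R * R) : Prop :=
  v <> (0, 0) /\
  exists T : R, 0 < T /\
    forall s t : R,
      kb_equiv a b (line p v s) (line p v t) <->
      exists k : Z, t - s = IZR k * T.

Definition on_geodesic (a b : R) (p v q : R * R) : Prop :=
  exists t : R, kb_equiv a b (line p v t) q.

Definition distinct_geodesics (a b : R) (p1 v1 p2 v2 : R * R) : Prop :=
  exists q : R * R,
    ~ (on_geodesic a b p1 v1 q <-> on_geodesic a b p2 v2 q).

Definition meet_in_exactly_three (a b : R) (p1 v1 p2 v2 : R * R) : Prop :=
  exists q1 q2 q3 : R * R,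
    on_geodesic a b p1 v1 q1 /\ on_geodesic a b p2 v2 q1 /\
    on_geodesic a b p1 v1 q2 /\ on_geodesic a b p2 v2 q2 /\
    on_geodesic a b p1 v1 q3 /\ on_geodesic a b p2 v2 q3 /\
    ~ kb_equiv a b q1 q2 /\ ~ kb_equiv a b q1 q3 /\ ~ kb_equiv a b q2 q3 /\
    (forall q, on_geodesic a b p1 v1 q -> on_geodesic a b p2 v2 q ->
       kb_equiv a b q1 q \/ kb_equiv a b q2 q \/ kb_equiv a b q3 q).

(* Main.v *)
Require Import Defs.
From Stdlib Require Import Reals ZArith Lra Lia.
Open Scope R_scope.

Lemma kb_act_comp a b m n m' n' p : exists N,
  kb_act a b m n (kb_act a b m' n' p) = kb_act a b (m+m') N p.
Proof.
  destruct p as [x y]; unfold kb_act; cbn [fst snd].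
  rewrite Z.even_add.
  destruct (Z.even m); destruct (Z.even m'); simpl.
  - exists (n'+n)%Z; rewrite !plus_IZR; f_equal; ring.
  - exists (n'+n)%Z; rewrite !plus_IZR; f_equal; ring.
  - exists (n-n')%Z; rewrite plus_IZR, minus_IZR; f_equal; ring.
  - exists (n-n')%Z; rewrite plus_IZR, minus_IZR; f_equal; ring.
Qed.

Lemma kb_act_inv a b m n p : exists N, kb_act a b (-m) N (kb_act a b m n p) = p.
Proof.
  destruct p as [x y]; unfold kb_act; cbn [fst snd].
  rewrite Z.even_opp.
  destruct (Z.even m); [exists (-n)%Z | exists n]; rewrite ?opp_IZR; f_equal; ring.
Qed.

Lemma kb_equiv_sym a b p q : kb_equiv a b p q -> kb_equiv a b q p.
Proof.
  intros [m [n H]]. destruct (kb_act_inv a b m n p) as [N HN].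
  exists (-m)%Z, N. rewrite H, HN. reflexivity.
Qed.

Lemma kb_equiv_trans a b p q r : kb_equiv a b p q -> kb_equiv a b q r -> kb_equiv a b p r.
Proof.
  intros [m [n H]] [m' [n' H']]. destruct (kb_act_comp a b m' n' m n p) as [N HN].
  exists (m'+m)%Z, N. rewrite H', H, HN. reflexivity.
Qed.

Lemma IZR_not_half z : IZR z <> 1/2.
Proof.
  intro H. destruct (Z.le_gt_cases z 0) as [h|h].
  - apply IZR_le in h. lra.
  - assert (h' : (1 <= z)%Z) by lia. apply IZR_le in h'. lra.
Qed.

Lemma axis a b p v : 0 < a -> 0 < b -> simple_closed_geodesic a b p v ->
  fst v = 0 \/ snd v = 0.
Proof.
  intros Ha Hb [Hv [T [HT Hs]]].
  destruct p as [x y], v as [v1 v2]; cbn [fst snd].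
  destruct (Req_dec v1 0) as [h1|h1]; [left; exact h1|].
  destruct (Req_dec v2 0) as [h2|h2]; [right; exact h2|].
  exfalso.
  assert (E0 : kb_equiv a b (line (x,y) (v1,v2) 0) (line (x,y) (v1,v2) T)).
  { apply (Hs 0 T). exists 1%Z. lra. }
  destruct E0 as [m0 [n0 E0]]. unfold line, kb_act in E0; cbn [fst snd] in E0.
  injection E0 as E01 E02.
  set (s := (- (a/v1) - 2*y/v2)/2).
  set (t := (a/v1 - 2*y/v2)/2).
  assert (Eb : kb_equiv a b (line (x,y) (v1,v2) s) (line (x,y) (v1,v2) t)).
  { exists 1%Z, 0%Z. unfold line, kb_act; cbn [fst snd Z.even].
    unfold s, t. f_equal; field; auto. }
  destruct ((proj1 (Hs s t)) Eb) as [k Hk].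
  assert (HA : a / v1 = IZR k * T) by (rewrite <- Hk; unfold t, s; field; auto).
  assert (HB : a = (a / v1) * v1) by (field; auto).
  rewrite HA in HB.
  assert (HC : T * v1 = IZR m0 * a) by lra.
  assert (Hk' : IZR (k * m0) = 1).
  { rewrite mult_IZR. apply (Rmult_eq_reg_r a); [|lra].
    rewrite Rmult_1_l. rewrite HB at 2. rewrite (Rmult_assoc (IZR k) T v1), HC. ring. }
  assert (Hodd : Z.even m0 = false).
  { assert (Hz : (k * m0)%Z = 1%Z) by (apply eq_IZR; exact Hk').
    assert (He := f_equal Z.even Hz). rewrite Z.even_mul in He. simpl in He.
    destruct (Z.even m0); [rewrite Bool.orb_true_r in He; discriminate|reflexivity]. }
  set (s1 := b / (4 * v2)).
  assert (E1 : kb_equiv a b (line (x,y) (v1,v2) s1) (line (x,y) (v1,v2) (s1 + T))).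
  { apply (Hs s1 (s1+T)). exists 1%Z. lra. }
  destruct E1 as [m1 [n1 E1]]. unfold line, kb_act in E1; cbn [fst snd] in E1.
  injection E1 as E11 E12.
  assert (Hm : m1 = m0).
  { apply eq_IZR. apply (Rmult_eq_reg_r a); [|lra]. nra. }
  rewrite Hm, Hodd in E12. rewrite Hodd in E02.
  assert (Hs1 : s1 * v2 = b/4) by (unfold s1; field; auto).
  assert (Hn : IZR (n1 - n0) * b = 1/2 * b) by (rewrite minus_IZR; nra).
  apply Rmult_eq_reg_r in Hn; [apply (IZR_not_half _ Hn) | lra].
Qed.

Lemma common a b p v p' v' q :
  on_geodesic a b p v q -> on_geodesic a b p' v' q ->
  exists t t', kb_equiv a b (line p' v' t') (line p v t).
Proof.
  intros [t Ht] [t' Ht']. exists t, t'.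
  eapply kb_equiv_trans; [exact Ht' | apply kb_equiv_sym; exact Ht].
Qed.

Lemma same_image a b p v p' v' :
  (forall t, exists t', kb_equiv a b (line p' v' t') (line p v t)) ->
  (forall t', exists t, kb_equiv a b (line p v t) (line p' v' t')) ->
  forall q, on_geodesic a b p v q <-> on_geodesic a b p' v' q.
Proof.
  intros H1 H2 q; split; intros [t Ht].
  - destruct (H1 t) as [t' Ht']. exists t'. eapply kb_equiv_trans; eauto.
  - destruct (H2 t) as [t0 Ht0]. exists t0. eapply kb_equiv_trans; eauto.
Qed.

Lemma horiz_cover a b x c al x' c' al' t0 t0' :
  al' <> 0 ->
  kb_equiv a b (line (x',c') (al',0) t0') (line (x,c) (al,0) t0) ->
  forall t, exists t', kb_equiv a b (line (x',c') (al',0) t') (line (x,c) (al,0) t).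
Proof.
  intros Hal [M [N E]] t.
  unfold line, kb_act in E; cbn [fst snd] in E.
  injection E as E1 E2.
  exists (t0' + (t - t0) * al / al'). exists M, N.
  unfold line, kb_act; cbn [fst snd]. rewrite !Rmult_0_r. rewrite !Rmult_0_r in E2.
  f_equal.
  - replace ((t0' + (t - t0) * al / al') * al') with (t0'*al' + (t-t0)*al)
      by (field; auto). lra.
  - destruct (Z.even M); lra.
Qed.

Lemma vert_cover a b d y be d' y' be' t0 t0' :
  be' <> 0 ->
  kb_equiv a b (line (d',y') (0,be') t0') (line (d,y) (0,be) t0) ->
  forall t, exists t', kb_equiv a b (line (d',y') (0,be') t') (line (d,y) (0,be) t).
Proof.
  intros Hbe [M [N E]] t.
  unfold line, kb_act in E; cbn [fst snd] in E.
  injection E as E1 E2. rewrite !Rmult_0_r in E1.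
  destruct (Z.even M) eqn:HM.
  - exists (t0' + (t - t0) * be / be'). exists M, N.
    unfold line, kb_act; cbn [fst snd]. rewrite HM, !Rmult_0_r.
    f_equal; [lra|].
    replace ((t0' + (t - t0) * be / be') * be') with (t0'*be' + (t-t0)*be)
      by (field; auto). lra.
  - exists (t0' - (t - t0) * be / be'). exists M, N.
    unfold line, kb_act; cbn [fst snd]. rewrite HM, !Rmult_0_r.
    f_equal; [lra|].
    replace ((t0' - (t - t0) * be / be') * be') with (t0'*be' - (t-t0)*be)
      by (field; auto). lra.
Qed.

Lemma mixed a b x c al d y be q :
  on_geodesic a b (x,c) (al,0) q -> on_geodesic a b (d,y) (0,be) q ->
  kb_equiv a b (d,c) q \/ kb_equiv a b (d,-c) q.
Proof.
  intros [t [m [n E]]] [t' [m' [n' E']]].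
  destruct q as [q1 q2].
  unfold line, kb_act in E, E'; cbn [fst snd] in E, E'.
  injection E as E1 E2. injection E' as E1' E2'.
  destruct (Z.even m) eqn:Hm, (Z.even m') eqn:Hm'.
  - left. exists m', n. unfold kb_act; cbn [fst snd]. rewrite Hm'. f_equal; lra.
  - right. exists m', n. unfold kb_act; cbn [fst snd]. rewrite Hm'. f_equal; lra.
  - right. exists m', n. unfold kb_act; cbn [fst snd]. rewrite Hm'. f_equal; lra.
  - left. exists m', n. unfold kb_act; cbn [fst snd]. rewrite Hm'. f_equal; lra.
Qed.

Lemma pigeon a b A B q1 q2 q3 :
  (kb_equiv a b A q1 \/ kb_equiv a b B q1) ->
  (kb_equiv a b A q2 \/ kb_equiv a b B q2) ->
  (kb_equiv a b A q3 \/ kb_equiv a b B q3) ->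
  ~ kb_equiv a b q1 q2 -> ~ kb_equiv a b q1 q3 -> ~ kb_equiv a b q2 q3 -> False.
Proof.
  intros [h1|h1] [h2|h2] [h3|h3] n12 n13 n23;
  first [ apply n12; eapply kb_equiv_trans; [apply kb_equiv_sym; exact h1|exact h2]
        | apply n13; eapply kb_equiv_trans; [apply kb_equiv_sym; exact h1|exact h3]
        | apply n23; eapply kb_equiv_trans; [apply kb_equiv_sym; exact h2|exact h3] ].
Qed.

Theorem mainTheorem9 (a b : R) (p1 v1 p2 v2 : R * R) :
  0 < a -> 0 < b ->
  simple_closed_geodesic a b p1 v1 ->
  simple_closed_geodesic a b p2 v2 ->
  distinct_geodesics a b p1 v1 p2 v2 ->
  ~ meet_in_exactly_three a b p1 v1 p2 v2.
Proof.
  intros Ha Hb H1 H2 Hd Hm.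
  pose proof (axis _ _ _ _ Ha Hb H1) as A1.
  pose proof (axis _ _ _ _ Ha Hb H2) as A2.
  destruct H1 as [Hv1 _]. destruct H2 as [Hv2 _].
  destruct p1 as [x1 y1], v1 as [a1 b1], p2 as [x2 y2], v2 as [a2 b2].
  cbn [fst snd] in A1, A2.
  destruct Hm as [q1 [q2 [q3 [H11 [H12 [H21 [H22 [H31 [H32 [N12 [N13 [N23 _]]]]]]]]]]]].
  destruct Hd as [q Hq].
  destruct A1 as [e1|e1], A2 as [e2|e2]; subst.
  - assert (hb1 : b1 <> 0) by (intro; subst; apply Hv1; reflexivity).
    assert (hb2 : b2 <> 0) by (intro; subst; apply Hv2; reflexivity).
    destruct (common _ _ _ _ _ _ _ H11 H12) as [t [t' E]].
    apply Hq. apply same_image.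
    + exact (vert_cover _ _ _ _ _ _ _ _ _ _ hb2 E).
    + exact (vert_cover _ _ _ _ _ _ _ _ _ _ hb1 (kb_equiv_sym _ _ _ _ E)).
  - apply (pigeon a b (x1,y2) (x1,-y2) q1 q2 q3); auto; apply (mixed _ _ x2 _ a2 _ y1 b1); auto.
  - apply (pigeon a b (x2,y1) (x2,-y1) q1 q2 q3); auto; apply (mixed _ _ x1 _ a1 _ y2 b2); auto.
  - assert (ha1 : a1 <> 0) by (intro; subst; apply Hv1; reflexivity).
    assert (ha2 : a2 <> 0) by (intro; subst; apply Hv2; reflexivity).
    destruct (common _ _ _ _ _ _ _ H11 H12) as [t [t' E]].
    apply Hq. apply same_image.
    + exact (horiz_cover _ _ _ _ _ _ _ _ _ _ ha2 E).
    + exact (horiz_cover _ _ _ _ _ _ _ _ _ _ ha1 (kb_equiv_sym _ _ _ _ E)).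
Qed.
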